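(* Let $k$ be an algebraically closed field of characteristic $0$, $G$ a finite group and $V$ any finite-dimensional $G$-module. Then $\mathrm{pol\,ind}(V)=\infty$.
   Context: For $n\in\mathbb N$, $G$ acts diagonally on $V^{\oplus n}$. Polarizations of $f\in k[V]$: $f(\alpha_1v_1+\dots+\alpha_nv_n)=\sum_{(i_1,\dots,i_n)\in\mathbb Z_+^n}\alpha_1^{i_1}\cdots\alpha_n^{i_n}f_{i_1,\dots,i_n}(v_1,\dots,v_n)$; $\mathrm{pol}_nk[V]^G\subseteq k[V^{\oplus n}]^G$ is generated by polarizations of all $f\in k[V]^G$. $\mathcal N_{V^{\oplus n},G}=\{w:F(w)=F(0)\ \forall F\in k[V^{\oplus n}]^G\}$, $\mathcal P_{V^{\oplus n},G}=\{w:h(w)=h(0)\ \forall h\in\mathrm{pol}_nk[V]^G\}$. The polarization index $\mathrm{pol\,ind}(V)$ is the supremum of all $n\in\mathbb N$ with $\mathcal N_{V^{\oplus n},G}=\mathcal P_{V^{\oplus n},G}$. *)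

(* Defs.v *)
From HB Require Import structures.
From mathcomp Require Import all_boot all_order all_algebra all_fingroup.
From mathcomp Require Import mxrepresentation.
From mathcomp Require Import mpoly.
Set Implicit Arguments. Unset Strict Implicit. Unset Printing Implicit Defensive.
Import GRing.Theory.
Local Open Scope ring_scope.

Section PolInd.
Variables (k : fieldType) (gT : finGroupType) (G : {group gT}) (d : nat).
Variable rho : mx_representation k G d.

(* V = k^d, realised as row vectors 'rV[k]_d, with (right) action v |-> v *m rho g.
   V^{(+)n} is realised as n x d matrices (row l = v_l); the diagonal action
   is w |-> w *m rho g.  k[V^{(+)n}] = {mpoly k[n*d]}, the variable
   mxvec_index l j being the j-th coordinate of v_l. *)

Definition evalV (f : {mpoly k[d]}) (v : 'rV[k]_d) : k := f.@[fun j => v 0 j].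

Definition evalVn (n : nat) (F : {mpoly k[n * d]}) (w : 'M[k]_(n, d)) : k :=
  F.@[fun i => mxvec w 0 i].

Definition invariantV (f : {mpoly k[d]}) : Prop :=
  forall g, g \in G -> forall v : 'rV[k]_d, evalV f (v *m rho g) = evalV f v.

Definition invariantVn (n : nat) (F : {mpoly k[n * d]}) : Prop :=
  forall g, g \in G -> forall w : 'M[k]_(n, d),
    evalVn F (w *m rho g) = evalVn F w.

(* f(alpha_1 v_1 + ... + alpha_n v_n) as a polynomial in alpha_1..alpha_n whose
   coefficients are polynomials in the coordinates of v_1, ..., v_n. *)
Definition pol_expand (n : nat) (f : {mpoly k[d]}) : {mpoly {mpoly k[n * d]}[n]} :=
  mmap (fun c : k => (c%:MP)%:MP)
       (fun j : 'I_d => \sum_(l < n) 'X_l * ('X_(mxvec_index l j))%:MP) f.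

Definition polarization (n : nat) (f : {mpoly k[d]}) (i : 'X_{1..n}) : {mpoly k[n * d]} :=
  (pol_expand n f)@_i.

Inductive in_pol_alg (n : nat) : {mpoly k[n * d]} -> Prop :=
  | pol_alg_const (c : k) : in_pol_alg (c%:MP)
  | pol_alg_gen (f : {mpoly k[d]}) (i : 'X_{1..n}) :
      invariantV f -> in_pol_alg (polarization f i)
  | pol_alg_add (p q : {mpoly k[n * d]}) : in_pol_alg p -> in_pol_alg q -> in_pol_alg (p + q)
  | pol_alg_mul (p q : {mpoly k[n * d]}) : in_pol_alg p -> in_pol_alg q -> in_pol_alg (p * q).

Definition nullcone (n : nat) (w : 'M[k]_(n, d)) : Prop :=
  forall F : {mpoly k[n * d]}, invariantVn F -> evalVn F w = evalVn F 0.

Definition polcone (n : nat) (w : 'M[k]_(n, d)) : Prop :=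
  forall h : {mpoly k[n * d]}, in_pol_alg h -> evalVn h w = evalVn h 0.

Definition N_eq_P (n : nat) : Prop := forall w : 'M[k]_(n, d), nullcone w <-> polcone w.

(* pol ind(V) = infinity : the set of n with N = P is unbounded
   (its supremum in N u {oo} is oo). *)
Definition pol_ind_infinite : Prop := forall m : nat, exists2 n : nat, (m <= n)%N & N_eq_P n.

End PolInd.

(* Main.v *)
Require Import Defs.
From HB Require Import structures.
From mathcomp Require Import all_boot all_order all_algebra all_fingroup.
From mathcomp Require Import mxrepresentation.
From mathcomp Require Import mpoly.
Set Implicit Arguments. Unset Strict Implicit. Unset Printing Implicit Defensive.
Import GRing.Theory.
Local Open Scope ring_scope.

Lemma rmorph_mmap (n : nat) (R : ringType) (S T : comRingType)
  (phi : {rmorphism S -> T}) (f : R -> S) (h : 'I_n -> S) (p : {mpoly R[n]}) :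
  phi (mmap f h p) = mmap (phi \o f) (phi \o h) p.
Proof.
rewrite /mmap rmorph_sum; apply: eq_bigr => m _.
rewrite rmorphM /mmap1 rmorph_prod; congr (_ * _); apply: eq_bigr => i _.
by rewrite rmorphXn.
Qed.

Section S.
Variables (k : closedFieldType) (gT : finGroupType) (G : {group gT}) (d : nat).
Variable rho : mx_representation k G d.

Definition Lval (c : 'I_d -> k) (u : 'rV[k]_d) : k := \sum_j c j * u 0 j.

Definition Fpol m (X : 'I_d -> {mpoly k[m]}) (c : 'I_d -> k) : {mpoly k[m]} :=
  \prod_(g in G) \sum_(j < d) (c j)%:MP * \sum_(i < d) (rho g i j)%:MP * X i.

Lemma Fpol_eval m X c a :
  (@Fpol m X c).@[a] = \prod_(g in G) Lval c ((\row_i (X i).@[a]) *m rho g).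
Proof.
rewrite /Fpol rmorph_prod; apply: eq_bigr => g _.
rewrite rmorph_sum; apply: eq_bigr => j _.
rewrite rmorphM /= mevalC mxE rmorph_sum; congr (_ * _); apply: eq_bigr => i _.
by rewrite rmorphM /= mevalC mxE mulrC.
Qed.

Lemma Lval_inv c u h : h \in G ->
  \prod_(g in G) Lval c (u *m rho h *m rho g) = \prod_(g in G) Lval c (u *m rho g).
Proof.
move=> hG; rewrite [RHS](reindex_inj (mulgI h)) /=.
apply: eq_big => g; first by rewrite groupMl.
by move=> gG; rewrite repr_mxM // mulmxA.
Qed.

Lemma Lval0 c : Lval c 0 = 0.
Proof. by rewrite /Lval big1 // => j _; rewrite mxE mulr0. Qed.

Lemma Fprod0 c : \prod_(g in G) Lval c (0 *m rho g) = 0.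
Proof. by rewrite (bigD1 1%g) ?group1 //= mul0mx Lval0 mul0r. Qed.

Lemma sep_c (v : 'rV[k]_d) : v != 0 ->
  exists c, \prod_(g in G) Lval c (v *m rho g) != 0.
Proof.
move=> vn0.
pose P := \prod_(g in G) \sum_(j < d) (v *m rho g) 0 j *: ('X^j : {poly k}).
have Pn0 : P != 0.
  apply/prodf_neq0 => g gG.
  have un0 : v *m rho g != 0.
    apply: contraNneq vn0 => e.
    have : v *m rho g *m rho (g^-1)%g = v.
      by rewrite -mulmxA -repr_mxM ?groupV // mulgV repr_mx1 mulmx1.
    by rewrite e mul0mx => <-.
  have [j0 Hj0] : exists j0, (v *m rho g) 0 j0 != 0.
    apply/existsP; apply: contraNT un0 => /existsPn H.
    apply/eqP; apply/rowP => j; rewrite [RHS]mxE; apply/eqP; have := H j; by rewrite negbK.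
  apply/negP => /eqP e; move/negP: Hj0; apply; apply/eqP.
  have := congr1 (fun p : {poly k} => p`_j0) e.
  rewrite coef0 coef_sum (bigD1 j0) //= coefZ coefXn eqxx mulr1 big1 ?addr0 //.
  move=> j ne; rewrite coefZ coefXn.
  have -> : (nat_of_ord j0 == nat_of_ord j) = false.
    by apply/negbTE; rewrite eq_sym (inj_eq val_inj).
  by rewrite mulr0.
have [t Ht] := closed_nonrootP P Pn0.
exists (fun j : 'I_d => t ^+ j).
move: Ht; rewrite /root /P horner_prod; apply: contra => /eqP H.
apply/eqP; rewrite -H; apply: eq_bigr => g _.
rewrite horner_sum /Lval; apply: eq_bigr => j _.
by rewrite hornerZ hornerXn mulrC.
Qed.

Lemma row_nz n (w : 'M[k]_(n, d)) : w != 0 -> exists l, row l w != 0.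
Proof.
move=> wn0; case: (pickP (fun l => row l w != 0)) => [l Hl | H]; first by exists l.
case/eqP: wn0; apply/row_matrixP => l; move/negbFE: (H l) => /eqP ->.
by rewrite row0.
Qed.

Lemma rowX n (l : 'I_n) (u : 'M[k]_(n, d)) :
  \row_i ('X_(mxvec_index l i) : {mpoly k[n * d]}).@[fun i => mxvec u 0 i] = row l u.
Proof. by apply/rowP => j; rewrite !mxE mevalXU mxvecE. Qed.

Lemma rowX1 (v : 'rV[k]_d) :
  \row_i ('X_i : {mpoly k[d]}).@[fun j => v 0 j] = v.
Proof. by apply/rowP => j; rewrite !mxE mevalXU. Qed.

Lemma nullcone_zero n (w : 'M[k]_(n, d)) : nullcone rho w -> w = 0.
Proof.
move=> Hn; apply/eqP; apply: contraT => wn0.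
have [l Hl] := row_nz wn0.
have [c Hc] := sep_c Hl.
pose F : {mpoly k[n * d]} := Fpol (fun i => 'X_(mxvec_index l i)) c.
have inv : invariantVn rho F.
  move=> h hG u; rewrite /evalVn !Fpol_eval !rowX row_mul.
  exact: Lval_inv.
have := Hn F inv; rewrite /evalVn !Fpol_eval !rowX row0 Fprod0 => /eqP.
by rewrite (negbTE Hc).
Qed.

Definition el n (l : 'I_n) : 'I_n -> k := fun l' => (l' == l)%:R.

Lemma key n (l : 'I_n) (f : {mpoly k[d]}) (u : 'M[k]_(n, d)) :
  evalV f (row l u) = mmap (meval (fun i => mxvec u 0 i)) (el l) (pol_expand n f).
Proof.
rewrite /pol_expand rmorph_mmap /evalV /meval /mmap; apply: eq_bigr => m _.
congr (_ * _).
  by rewrite /= mmapC /= mevalC.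
apply: eq_bigr => j _; congr (_ ^+ _).
rewrite /= rmorph_sum (bigD1 l) //= big1 ?addr0.
  by rewrite rmorphM /= mmapX mmap1U mmapC /= mevalXU mxvecE /el eqxx mul1r mxE.
move=> l' ne; rewrite rmorphM /= mmapX mmap1U /el (negbTE ne) mul0r //.
Qed.


Lemma polcone_zero n (w : 'M[k]_(n, d)) : polcone rho w -> w = 0.
Proof.
move=> Hp; apply/eqP; apply: contraT => wn0.
have [l Hl] := row_nz wn0.
have [c Hc] := sep_c Hl.
pose f : {mpoly k[d]} := Fpol (fun i => 'X_i) c.
have inv : invariantV rho f.
  move=> h hG v; rewrite /evalV !Fpol_eval !rowX1.
  exact: Lval_inv.
have E : evalV f (row l w) = evalV f (row l 0).
  rewrite !key /mmap; apply: eq_bigr => m _; congr (_ * _).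
  apply: Hp; exact: pol_alg_gen.
move: E; rewrite /evalV Fpol_eval rowX1 Fpol_eval rowX1 row0 Fprod0 => /eqP.
by rewrite (negbTE Hc).
Qed.

End S.

Theorem theorem3p9 (k : closedFieldType) (hchar : [pchar k]%R =i pred0)
  (gT : finGroupType) (G : {group gT}) (d : nat) (rho : mx_representation k G d) :
  pol_ind_infinite rho.
Proof.
move=> m; exists m => // w; split.
  by move/nullcone_zero => -> h _.
by move/polcone_zero => -> F _.
Qed.
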